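(* For any connected graph $G_n$ on $n$ nodes, the stopping time of the broadcast protocol $\mathcal{B_{RR}}$ with the round-robin communication model is $O(n)$ rounds. In the asynchronous time model this holds with probability at least $1-n(2/e)^{3n}$, and in the synchronous time model with probability $1$.
   Context: Broadcast ($1$-dissemination): a single message initially located at one node must reach all nodes; a node holding the message transmits it to its communication partner when it acts (\texttt{PUSH}, or \texttt{EXCHANGE}). Round-robin gossip: each node chooses its communication partner according to a fixed cyclic list of its neighbors, contacting them in this order in its successive actions. Asynchronous time model: each timeslot one node chosen independently and uniformly at random acts; $n$ timeslots form a round. Synchronous time model: in each round every node acts; information received in a round can be sent only from the next round. The stopping time is the number of rounds until all nodes hold the message. *)

(* Defs.v *)
From Stdlib Require Import Reals.
From mathcomp Require Import all_boot.

Set Implicit Arguments.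
Unset Strict Implicit.
Unset Printing Implicit Defensive.

Definition connected_graph (n : nat) (adj : rel 'I_n) : Prop :=
  symmetric adj /\ irreflexive adj /\ forall u v : 'I_n, connect adj u v.

Definition rr_lists (n : nat) (adj : rel 'I_n) (L : 'I_n -> seq 'I_n) : Prop :=
  forall v : 'I_n, uniq (L v) /\ forall u : 'I_n, (u \in L v) = adj v u.

Definition partner (n : nat) (L : 'I_n -> seq 'I_n) (v : 'I_n) (k : nat) : 'I_n :=
  nth v (L v) (k %% size (L v)).

(* One transmission when v contacts u. exch = false: PUSH (holder v sends to u);
   exch = true: EXCHANGE (message moves in both directions). *)
Definition transmit (n : nat) (exch : bool) (I : {set 'I_n}) (v u : 'I_n) : {set 'I_n} :=
  if v \in I then u |: I
  else if exch && (u \in I) then v |: I else I.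

(* Asynchronous model: state = (informed set, number of past actions per node). *)
Definition async_step (n : nat) (exch : bool) (L : 'I_n -> seq 'I_n)
    (st : {set 'I_n} * ('I_n -> nat)) (v : 'I_n) : {set 'I_n} * ('I_n -> nat) :=
  let: (Inf, c) := st in
  (transmit exch Inf v (partner L v (c v)),
   fun w => if w == v then (c w).+1 else c w).

Definition async_informed (n : nat) (exch : bool) (L : 'I_n -> seq 'I_n)
    (src : 'I_n) (s : seq 'I_n) : {set 'I_n} :=
  (foldl (async_step exch L) ([set src], fun _ => 0%N) s).1.

(* Probability that all nodes are informed after R rounds (= R*n timeslots),
   actors chosen independently and uniformly: counting over all actor sequences. *)
Definition async_success_prob (n : nat) (exch : bool) (L : 'I_n -> seq 'I_n)
    (src : 'I_n) (rounds : nat) : R :=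
  Rdiv (INR #|[set f : {ffun 'I_(rounds * n) -> 'I_n} |
            async_informed exch L src [seq f i | i <- enum 'I_(rounds * n)] == [set: 'I_n]]|)
       (INR (n ^ (rounds * n))).

(* Synchronous model: in round r (0-indexed) every node performs its r-th
   action; only nodes informed at the start of the round transmit. *)
Definition sync_round (n : nat) (exch : bool) (L : 'I_n -> seq 'I_n)
    (r : nat) (I : {set 'I_n}) : {set 'I_n} :=
  [set w | [|| w \in I,
              [exists v, (v \in I) && (partner L v r == w)]
            | exch && (partner L w r \in I)]].

Fixpoint sync_informed (n : nat) (exch : bool) (L : 'I_n -> seq 'I_n)
    (src : 'I_n) (rounds : nat) : {set 'I_n} :=
  match rounds with
  | 0 => [set src]
  | r.+1 => sync_round exch L r (sync_informed exch L src r)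
  end.

(* Main.v *)
Require Import Defs.
From Stdlib Require Import Reals Lra.
From mathcomp Require Import all_boot zify.
Set Implicit Arguments.
Unset Strict Implicit.
Unset Printing Implicit Defensive.

Fixpoint Bn (m N K : nat) : nat :=
  match N with
  | 0 => (0 < K)
  | N'.+1 => Bn m N' K.-1 + m * Bn m N' K
  end.

Lemma Bn_K0 m N : Bn m N 0 = 0.
Proof. by elim: N => //= N ->; rewrite muln0. Qed.

Lemma Bn_mono m N K K' : K <= K' -> Bn m N K <= Bn m N K'.
Proof.
elim: N K K' => [|N IH] K K' /= h; first by case: K h => //; case: K'.
apply: leq_add; first by apply: IH; lia.
by rewrite leq_mul2l IH ?orbT.
Qed.

Lemma Bn_bound m N K : 2 ^ N * Bn m N K <= 2 ^ K * (2 * m + 1) ^ N.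
Proof.
elim: N K => [|N IH] K.
  by rewrite /= !expn0 mul1n muln1; case: K => // K; rewrite expn_gt0.
case: K => [|K]; first by rewrite Bn_K0 muln0.
rewrite /= !expnS.
have h1 := IH K. have h2 := IH K.+1.
rewrite expnS in h2.
move: h1 h2; set X := Bn m N K; set Y := Bn m N K.+1; set P := 2 ^ N; set Q := 2 ^ K; set T := (2 * m + 1) ^ N.
move=> h1 h2; nia.
Qed.
Definition cnt (n N : nat) (S : Type) (f : S -> 'I_n -> S) (phi : S -> nat) (s : S) : nat :=
  \sum_(g : {ffun 'I_N -> 'I_n}) (0 < phi (foldl f s [seq g i | i <- enum 'I_N])).

Definition consf (n N : nat) (p : 'I_n * {ffun 'I_N -> 'I_n}) : {ffun 'I_N.+1 -> 'I_n} :=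
  [ffun i => if unlift ord0 i is Some j then p.2 j else p.1].

Definition unconsf (n N : nat) (g : {ffun 'I_N.+1 -> 'I_n}) : 'I_n * {ffun 'I_N -> 'I_n} :=
  (g ord0, [ffun j => g (lift ord0 j)]).

Lemma consfK n N : cancel (@consf n N) (@unconsf n N).
Proof.
case=> a g; rewrite /unconsf /consf /= !ffunE unlift_none; congr pair.
by apply/ffunP=> j; rewrite !ffunE liftK.
Qed.

Lemma unconsfK n N : cancel (@unconsf n N) (@consf n N).
Proof.
move=> g; apply/ffunP=> i; rewrite /unconsf /consf ffunE /=.
case: unliftP => [j ->|->]; by rewrite ?ffunE.
Qed.

Lemma consf_seq n N p :
  [seq (@consf n N p) i | i <- enum 'I_N.+1] = p.1 :: [seq p.2 i | i <- enum 'I_N].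
Proof.
rewrite enum_ordSl /= -map_comp /consf ffunE unlift_none; congr cons.
by apply: eq_map => j /=; rewrite ffunE liftK.
Qed.

Lemma cnt_S n N S f phi s :
  @cnt n N.+1 S f phi s = \sum_(a : 'I_n) cnt N f phi (f s a).
Proof.
rewrite /cnt (reindex (@consf n N)); last first.
  by exists (@unconsf n N) => x _; [apply: consfK | apply: unconsfK].
rewrite pair_bigA; apply: eq_bigr => -[a g] _ /=.
by rewrite (consf_seq (a, g)).
Qed.

Lemma cnt_bound n N S f phi (BIG : nat)
  (Hmono : forall s a, phi (f s a) <= phi s)
  (Hdec : forall s, 0 < phi s < BIG -> exists a, phi (f s a) < phi s) :
  forall s, phi s < BIG -> @cnt n N S f phi s <= Bn n.-1 N (phi s).
Proof.
elim: N => [|N IH] s hs.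
  rewrite /cnt enum_ord0 /= sum_nat_const card_ffun !card_ord expn0 mul1n.
  by case: (phi s).
rewrite cnt_S /=.
case: (posnP (phi s)) => [h0|hp].
  rewrite big1 // => a _; apply/eqP; rewrite -leqn0.
  have h1 : phi (f s a) = 0 by have := Hmono s a; rewrite h0; lia.
  by rewrite -(Bn_K0 n.-1 N) -h1 IH // h1 (leq_ltn_trans _ hs) ?h0.
have [a0 ha0] : exists a, phi (f s a) < phi s by apply: Hdec; rewrite hp hs.
rewrite (bigD1 a0) //=; apply: leq_add.
  apply: (leq_trans (IH _ (leq_ltn_trans (Hmono s a0) hs))).
  by apply: Bn_mono; lia.
apply: (leq_trans (n := \sum_(a | a != a0) Bn n.-1 N (phi s))).
  apply: leq_sum => a _; apply: (leq_trans (IH _ (leq_ltn_trans (Hmono s a) hs))).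
  exact: Bn_mono.
rewrite sum_nat_cond_const.
have -> : #|[set a | a != a0]| = n.-1.
  rewrite -[in RHS](card_ord n) -(cardsC1 a0); apply: eq_card => x.
  by rewrite !inE.
by [].
Qed.

Lemma split_first (T : Type) (a : pred T) (s : seq T) :
  0 < count a s -> exists s1 x s2, s = s1 ++ x :: s2 /\ a x /\ count a s2 = (count a s).-1.
Proof.
elim: s => //= y t IH; case ay: (a y) => /= h.
  by exists [::], y, t.
have [s1 [x [s2 [-> [ax hc]]]]] := IH h.
by exists (y :: s1), x, s2.
Qed.

Lemma path_suffix (T : Type) (e : rel T) a l y t : path e a (l ++ y :: t) -> path e y t.
Proof. by rewrite cat_path /= => /and3P [_ _ ->]. Qed.

Lemma shorten (T : eqType) (e : rel T) (u : T) (s : seq T) :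
  symmetric e -> sorted e s -> 3 < count (e u) s ->
  exists s', [/\ sorted e s', s' != [::], size s' < size s, (forall d, head d s' = head d s) & (forall d, last d s' = last d s)].
Proof.
move=> hsym hs h4.
have [s1 [x [r [ds [ax hr]]]]] := split_first (ltnW (ltnW (ltnW h4))).
have h3 : 0 < count (e u) r by lia.
have [r1 [z1 [r' [dr [_ hr']]]]] := split_first h3.
have h2 : 0 < count (e u) r' by lia.
have [r2 [z2 [r'' [dr' [_ hr'']]]]] := split_first h2.
have h1 : 0 < count (e u) r'' by lia.
have [r3 [y [s3 [dr'' [ay _]]]]] := split_first h1.
exists (s1 ++ x :: u :: y :: s3).
have es : s = s1 ++ x :: (r1 ++ z1 :: r2 ++ z2 :: r3 ++ y :: s3).
  by rewrite ds dr dr' dr''.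
move: hs; rewrite es !sorted_cat_cons => /andP [hs1 hp]; split.
- rewrite hs1 /=; rewrite (hsym u x) in ax; rewrite ax ay /=.
  by apply: path_suffix (path_suffix (path_suffix hp)).
- by case: (s1).
- by rewrite !size_cat /= !size_cat /= !size_cat /= ?size_cat /=; lia.
- by move=> d; case: (s1) => [|? ?].
- by move=> d; rewrite !last_cat /= last_cat /= last_cat /= last_cat.
Qed.

Lemma good_path (T : finType) (e : rel T) (src w : T) : symmetric e -> connect e src w ->
  exists s, [/\ sorted e s, s != [::], head src s = src, last src s = w & forall u, count (e u) s <= 3].
Proof.
move=> hsym /connectP [p hp ->].
suff H : forall k s, size s <= k -> s != [::] -> sorted e s ->
  exists s', [/\ sorted e s', s' != [::], head src s' = head src s, last src s' = last src s
     & forall u, count (e u) s' <= 3].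
  by have [s' [h1 h2 h3 h4 h5]] := H _ (src :: p) (leqnn _) isT hp; exists s'.
elim=> [|k IH] s hk hne hs; first by move: hne hk; case: (s).
case: (boolP [forall u, count (e u) s <= 3]) => [/forallP hall|].
  by exists s.
rewrite negb_forall => /existsP [u]; rewrite -ltnNge => hu.
have [s'' [h1 h2 h3 h4 h5]] := shorten hsym hs hu.
have [s' [g1 g2 g3 g4 g5]] := IH s'' ltac:(lia) h2 h1.
by exists s'; rewrite g3 g4 h4 h5.
Qed.

Definition tt (n : nat) (L : 'I_n -> seq 'I_n) (v u : 'I_n) (k : nat) : nat :=
  find (fun j => partner L v (k + j) == u) (iota 0 (size (L v))).

Lemma tt_spec n (L : 'I_n -> seq 'I_n) v u k :
  u \in L v -> tt L v u k < size (L v) /\ partner L v (k + tt L v u k) = u.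
Proof.
move=> hu; set m := size (L v).
have m0 : 0 < m by rewrite /m; case: (L v) hu.
set x := index u (L v).
have hx : x < m by rewrite /x /m index_mem.
set j := (x + m - k %% m) %% m.
have hj : j < m by rewrite /j ltn_mod.
have pj : partner L v (k + j) = u.
  rewrite /partner -/m /j modnDmr.
  have -> : (k + (x + m - k %% m)) %% m = x.
    have hk := ltn_pmod k m0.
    rewrite {1}(divn_eq k m).
    have -> : k %/ m * m + k %% m + (x + m - k %% m) = (k %/ m).+1 * m + x by lia.
    by rewrite modnMDl modn_small.
  by rewrite nth_index.
have hh : has (fun j => partner L v (k + j) == u) (iota 0 m).
  by apply/hasP; exists j; rewrite ?mem_iota ?pj //=.
have hf := hh; rewrite has_find size_iota in hf.
split; first by [].
have := nth_find 0 hh; rewrite /tt -/m.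
rewrite nth_iota //.
by move/eqP.
Qed.

Lemma tt0 n (L : 'I_n -> seq 'I_n) v u k :
  u \in L v -> tt L v u k = 0 -> partner L v k = u.
Proof. by move=> hu h; have [_] := tt_spec k hu; rewrite h addn0. Qed.

Lemma tt_step n (L : 'I_n -> seq 'I_n) v u k :
  u \in L v -> 0 < tt L v u k -> tt L v u k.+1 <= (tt L v u k).-1.
Proof.
move=> hu hp; have [h1 h2] := tt_spec k hu.
rewrite leqNgt; apply/negP => hlt.
have := before_find 0 hlt; rewrite nth_iota; last by lia.
rewrite add0n /=.
have -> : k.+1 + (tt L v u k).-1 = k + tt L v u k by lia.
by rewrite h2 eqxx.
Qed.

Fixpoint Ssum (n : nat) (L : 'I_n -> seq 'I_n) (q : seq 'I_n) : nat :=
  match q with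
  | [::] => 0
  | u :: q' => if q' is [::] then 0 else size (L u) + Ssum L q'
  end.

Definition cost (n : nat) (L : 'I_n -> seq 'I_n) (v : 'I_n) (q : seq 'I_n) (c : 'I_n -> nat) : nat :=
  match q with
  | [::] => 0
  | u :: _ => (tt L v u (c v)).+1 + Ssum L q
  end.

Fixpoint phi (n : nat) (L : 'I_n -> seq 'I_n) (BIG : nat) (p : seq 'I_n) (I : {set 'I_n}) (c : 'I_n -> nat) : nat :=
  match p with
  | [::] => BIG
  | v :: q => minn (if v \in I then cost L v q c else BIG) (phi L BIG q I c)
  end.

Definition chain (n : nat) (L : 'I_n -> seq 'I_n) (p : seq 'I_n) := sorted (fun v u => u \in L v) p.

Lemma phi_le n (L : 'I_n -> seq 'I_n) BIG p I c : phi L BIG p I c <= BIG.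
Proof. by elim: p => //= v q IH; rewrite geq_min IH orbT. Qed.

Lemma cost_le n (L : 'I_n -> seq 'I_n) v q c : chain L (v :: q) -> cost L v q c <= Ssum L (v :: q).
Proof.
case: q => //= u q /andP [hu _].
by have [h _] := tt_spec (c v) hu; rewrite leq_add2r.
Qed.

Lemma chain_tl n (L : 'I_n -> seq 'I_n) v q : chain L (v :: q) -> chain L q.
Proof. exact: path_sorted. Qed.

Lemma phi_key n (L : 'I_n -> seq 'I_n) BIG v u q (I I' : {set 'I_n}) c c' :
  chain L (v :: u :: q) -> v \in I -> I \subset I' -> partner L v (c v) \in I' ->
  c' v = (c v).+1 -> phi L BIG (v :: u :: q) I' c' < cost L v (u :: q) c.
Proof.
move=> hch hv hII hp hc.
have hu : u \in L v by case/andP: hch.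
have hv' : v \in I' by apply: (subsetP hII).
case: (posnP (tt L v u (c v))) => ht.
  have hpu := tt0 hu ht; rewrite hpu in hp.
  apply: (leq_ltn_trans (geq_minr _ _)); rewrite /= hp.
  apply: (leq_ltn_trans (geq_minl _ _)).
  apply: (leq_ltn_trans (cost_le c' (chain_tl hch))).
  by rewrite /cost ht.
apply: (leq_ltn_trans (geq_minl _ _)); rewrite hv' /cost hc.
have := tt_step hu ht; lia.
Qed.

Lemma phi_mono n (L : 'I_n -> seq 'I_n) BIG p (I I' : {set 'I_n}) c c' a :
  chain L p -> I \subset I' -> (forall x, x != a -> c' x = c x) -> c' a = (c a).+1 ->
  (a \in I -> partner L a (c a) \in I') -> phi L BIG p I' c' <= phi L BIG p I c.
Proof.
move=> + hII hc hca hpa; elim: p => //= v q IH hch.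
rewrite leq_min; apply/andP; split; last first.
  by apply: (leq_trans (geq_minr _ _)); apply: IH; apply: chain_tl hch.
case hv: (v \in I); last by apply: (leq_trans (geq_minr _ _)); apply: phi_le.
have hv' : v \in I' by apply: (subsetP hII).
case: q IH hch => [|u q] IH hch.
  by apply: (leq_trans (geq_minl _ _)); rewrite hv'.
case: (eqVneq v a) => [eva|nva].
  subst v; apply: ltnW; apply: (@phi_key _ L BIG a u q I I' c c') => //; exact: hpa.
rewrite hv' /cost (hc _ nva); apply: geq_minl.
Qed.

Lemma phi_dec n (L : 'I_n -> seq 'I_n) BIG p (I : {set 'I_n}) c :
  chain L p -> 0 < phi L BIG p I c < BIG ->
  exists a, forall (I' : {set 'I_n}) c', I \subset I' -> c' a = (c a).+1 ->
     (a \in I -> partner L a (c a) \in I') -> phi L BIG p I' c' < phi L BIG p I c.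
Proof.
elim: p => [|v q IH] hch /=; first by rewrite ltnn andbF.
case hv: (v \in I); last first.
  rewrite (minn_idPr (phi_le _ _ _ _ _)) => hb.
  have [a Ha] := IH (chain_tl hch) hb.
  exists a => I' c' h1 h2 h3; apply: (leq_ltn_trans (geq_minr _ _)); exact: Ha.
case: (leqP (cost L v q c) (phi L BIG q I c)) => hle.
  move=> /andP [hpos _].
  case: q hch hle hpos IH => [|u q] hch hle hpos IH; first by [].
  exists v => I' c' h1 h2 h3.
  have := (@phi_key _ L BIG v u q I I' c c' hch hv h1 (h3 hv) h2); by [].
move=> hb.
have [a Ha] := IH (chain_tl hch) hb.
exists a => I' c' h1 h2 h3; apply: (leq_ltn_trans (geq_minr _ _)); exact: Ha.
Qed.

Lemma phi_zero n (L : 'I_n -> seq 'I_n) BIG p (I : {set 'I_n}) c x0 :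
  0 < BIG -> phi L BIG p I c = 0 -> last x0 p \in I.
Proof.
move=> hB; elim: p x0 => [|v q IH] x0 /= h; first by simpl in h; rewrite h in hB.
move: h; rewrite /minn; case: ifP => _ h.
  case: ifP h => hv h; last by rewrite h in hB.
  by case: q {IH} h.
case: q IH h => [|u q] IH h /=; first by simpl in h; rewrite h in hB.
exact: (IH v).
Qed.

Lemma phi_init n (L : 'I_n -> seq 'I_n) BIG src q c :
  chain L (src :: q) -> phi L BIG (src :: q) [set src] c <= Ssum L (src :: q).
Proof.
move=> hch /=; rewrite in_set1 eqxx.
apply: (leq_trans (geq_minl _ _)); exact: cost_le.
Qed.

Lemma Ssum_le n (L : 'I_n -> seq 'I_n) s : Ssum L s <= \sum_(v <- s) size (L v).
Proof.
elim: s => [|v s IH] /=; first by rewrite big_nil.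
rewrite big_cons; case: s IH => [|u s] IH; first by [].
by rewrite leq_add2l.
Qed.

Lemma count_sum (T : Type) (a : pred T) s : count a s = \sum_(v <- s) a v.
Proof. by elim: s => [|v s IH] /=; rewrite ?big_nil ?big_cons ?IH. Qed.

Lemma deg_sum n (adj : rel 'I_n) (L : 'I_n -> seq 'I_n) s :
  symmetric adj -> rr_lists adj L -> (forall u, count (adj u) s <= 3) -> Ssum L s <= 3 * n.
Proof.
move=> hsym hL hc; apply: (leq_trans (Ssum_le L s)).
have hdeg : forall v, size (L v) = \sum_(u : 'I_n) adj v u.
  move=> v; have [hu hm] := hL v.
  rewrite -(card_uniqP hu) -sum1_card big_mkcond /=.
  by apply: eq_bigr => u _; rewrite hm; case: (adj v u).
rewrite (eq_bigr _ (fun v _ => hdeg v)) exchange_big /=.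
apply: (leq_trans (n := \sum_(u : 'I_n) 3)).
  apply: leq_sum => u _; apply: (leq_trans _ (hc u)); rewrite count_sum.
  by rewrite leq_eqVlt; apply/orP; left; apply/eqP; apply: eq_bigr => v _; rewrite hsym.
by rewrite sum_nat_const card_ord mulnC.
Qed.

Lemma path_for n (adj : rel 'I_n) (L : 'I_n -> seq 'I_n) src w :
  connected_graph adj -> rr_lists adj L ->
  exists q, [/\ chain L (src :: q), last src q = w & Ssum L (src :: q) <= 3 * n].
Proof.
move=> [hsym [hirr hcon]] hL.
have [s [hs hne hh hl hc]] := good_path hsym (hcon src w).
case: s hs hne hh hl hc => [|v q] // hs _ hh hl hc.
simpl in hh; subst v.
exists q; split; [|exact: hl|exact: (deg_sum hsym hL hc)].
rewrite /chain /=; rewrite -(eq_path (e := adj)) //.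
by move=> x y /=; have [_ ->] := hL x.
Qed.

Lemma sync_sub n exch (L : 'I_n -> seq 'I_n) r (I : {set 'I_n}) : I \subset sync_round exch L r I.
Proof. by apply/subsetP => x hx; rewrite inE hx. Qed.

Lemma sync_push n exch (L : 'I_n -> seq 'I_n) r (I : {set 'I_n}) a :
  a \in I -> partner L a r \in sync_round exch L r I.
Proof.
move=> ha; rewrite inE; apply/or3P; apply: Or32; apply/existsP; exists a.
by rewrite ha eqxx.
Qed.

Lemma sync_mono n exch (L : 'I_n -> seq 'I_n) src r r' :
  r <= r' -> sync_informed exch L src r \subset sync_informed exch L src r'.
Proof.
elim: r' => [|r' IH]; first by rewrite leqn0 => /eqP ->.
rewrite leq_eqVlt => /orP [/eqP ->|h]; first by [].
exact: subset_trans (IH h) (sync_sub _ _ _ _).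
Qed.

Lemma sync_reach n (adj : rel 'I_n) (L : 'I_n -> seq 'I_n) src exch w :
  connected_graph adj -> rr_lists adj L ->
  w \in sync_informed exch L src (3 * n).
Proof.
move=> hg hL.
have [q [hch hl hS]] := path_for src w hg hL.
set BIG := (3 * n).+1.
set Phi := fun r => phi L BIG (src :: q) (sync_informed exch L src r) (fun _ => r).
have H : forall r, (exists2 r', r' <= r & w \in sync_informed exch L src r') \/ Phi r <= 3 * n - r.
  elim=> [|r IH].
    right; rewrite subn0; apply: leq_trans hS.
    exact: phi_init.
  case: IH => [[r' h1 h2]|h]; first by left; exists r' => //; apply: leqW.
  case: (posnP (Phi r)) => hp.
    left; exists r => //.
    have := phi_zero src (ltn0Sn _) hp; by rewrite /= hl.
  have hlt : 0 < Phi r < BIG by rewrite hp /=; rewrite /BIG ltnS (leq_trans h) ?leq_subr.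
  have [a Ha] := phi_dec hch hlt.
  right.
  have := Ha (sync_informed exch L src r.+1) (fun _ => r.+1) (sync_sub _ _ _ _) erefl
    (fun h => sync_push exch L r h).
  move=> h2; change (is_true (Phi r.+1 < Phi r)) in h2; lia.
case: (H (3 * n)) => [[r' h1 h2]|h].
  exact: (subsetP (sync_mono exch L src h1)).
rewrite subnn leqn0 in h; move/eqP: h => h.
by have := phi_zero src (ltn0Sn _) h; rewrite /= hl.
Qed.

Lemma transmit_sub n exch (I : {set 'I_n}) v u : I \subset transmit exch I v u.
Proof.
rewrite /transmit; case: ifP => _; first exact: subsetUr.
case: ifP => _; [exact: subsetUr | exact: subxx].
Qed.

Lemma transmit_push n exch (I : {set 'I_n}) v u : v \in I -> u \in transmit exch I v u.
Proof. by rewrite /transmit => ->; rewrite setU11. Qed.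

Lemma async_fail_w n (adj : rel 'I_n) (L : 'I_n -> seq 'I_n) src exch w N :
  connected_graph adj -> rr_lists adj L ->
  \sum_(g : {ffun 'I_N -> 'I_n}) (w \notin async_informed exch L src [seq g i | i <- enum 'I_N])
    <= Bn n.-1 N (3 * n).
Proof.
move=> hg hL.
have [q [hch hl hS]] := path_for src w hg hL.
set BIG := (3 * n).+1.
pose Phi := fun st : {set 'I_n} * ('I_n -> nat) => phi L BIG (src :: q) st.1 st.2.
pose s0 := ([set src], fun _ : 'I_n => 0).
have hs0 : Phi s0 <= 3 * n by apply: leq_trans hS; exact: phi_init.
apply: (leq_trans (n := cnt N (async_step exch L) Phi s0)).
  apply: leq_sum => g _.
  rewrite /async_informed -/s0.
  case: (posnP (Phi (foldl (async_step exch L) s0 [seq g i | i <- enum 'I_N]))) => h.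
    by have := phi_zero src (ltn0Sn _) h; rewrite /= hl => ->.
  by case: (_ \notin _).
apply: (leq_trans (cnt_bound (BIG := BIG) _ _ _ _)).
- case=> I c a; rewrite /Phi /=.
  apply: (@phi_mono _ L BIG (src :: q) I _ c _ a) => //.
  + exact: transmit_sub.
  + by move=> x /negbTE ->.
  + by rewrite eqxx.
  + exact: transmit_push.
- case=> I c hb; have [a Ha] := phi_dec hch hb.
  exists a; rewrite /Phi /=; apply: Ha.
  + exact: transmit_sub.
  + by rewrite eqxx.
  + exact: transmit_push.
- by rewrite /BIG ltnS.
- by apply: Bn_mono.
Qed.

Lemma async_count n (adj : rel 'I_n) (L : 'I_n -> seq 'I_n) src exch N :
  connected_graph adj -> rr_lists adj L ->
  n ^ N <= #|[set f : {ffun 'I_N -> 'I_n} |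
            async_informed exch L src [seq f i | i <- enum 'I_N] == [set: 'I_n]]|
           + n * Bn n.-1 N (3 * n).
Proof.
move=> hg hL.
set P := fun f : {ffun 'I_N -> 'I_n} =>
  async_informed exch L src [seq f i | i <- enum 'I_N] == [set: 'I_n].
have -> : n ^ N = \sum_(f : {ffun 'I_N -> 'I_n}) 1.
  by rewrite sum_nat_const card_ffun !card_ord muln1.
rewrite -sum1dep_card big_mkcond /=.
apply: (leq_trans (n := \sum_(f : {ffun 'I_N -> 'I_n}) ((if P f then 1 else 0) +
   \sum_(w : 'I_n) (w \notin async_informed exch L src [seq f i | i <- enum 'I_N])))).
  apply: leq_sum => f _.
  case hP: (P f); first by [].
  case: (boolP [forall w, w \in async_informed exch L src [seq f i | i <- enum 'I_N]]).
    move/forallP => h; move: hP; rewrite /P.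
    have -> : async_informed exch L src [seq f i | i <- enum 'I_N] = [set: 'I_n].
      by apply/setP => x; rewrite inE h.
    by rewrite eqxx.
  rewrite negb_forall => /existsP [w hw].
  by rewrite add0n (bigD1 w) //= hw.
rewrite big_split /=; apply: leq_add; first by rewrite [in X in _ <= X]big_mkcond.
rewrite exchange_big /=.
apply: (leq_trans (n := \sum_(w : 'I_n) Bn n.-1 N (3 * n))).
  by apply: leq_sum => w _; apply: async_fail_w hg hL.
by rewrite sum_nat_const card_ord.
Qed.
Lemma expn_pow (m k : nat) : expn m k = Nat.pow m k.
Proof. elim: k => [|k IH] //=; by rewrite expnS IH mulnE. Qed.

Local Open Scope R_scope.

Lemma INR_expn (m k : nat) : INR (expn m k) = (pow (INR m) k).
Proof. by rewrite expn_pow pow_INR. Qed.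

Lemma INR_muln (a b : nat) : INR (a * b)%N = (INR a * INR b).
Proof. by rewrite mulnE mult_INR. Qed.

Lemma INR_addn (a b : nat) : INR (a + b)%N = (INR a + INR b).
Proof. by rewrite -plusE plus_INR. Qed.


Lemma exp_pow_R (x : R) (k : nat) : (pow (exp x) k) = exp (INR k * x).
Proof.
elim: k => [|k IH]; first by rewrite /= Rmult_0_l exp_0.
rewrite S_INR /= IH -exp_plus; f_equal; ring.
Qed.

Lemma le_INR' (a b : nat) : (a <= b)%N -> (INR a <= INR b).
Proof. by move/leP; apply: le_INR. Qed.
Arguments le_INR' {a b}.

Lemma real_part (n S B : nat) : (0 < n)%N ->
  (n ^ (6 * n * n) <= S + n * B)%N ->
  (2 ^ (6 * n * n) * B <= 2 ^ (3 * n)%N * (2 * n.-1 + 1) ^ (6 * n * n))%N ->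
  Rge (Rdiv (INR S) (INR (n ^ (6 * n * n))%N))
      (Rminus 1 (Rmult (INR n) (pow (Rdiv 2 (exp 1)) (3 * n)%N))).
Proof.
move=> hn h1 h2.
have hx : (1 <= INR n) by have := le_INR' hn.
have e21 : INR (2 * n.-1 + 1)%N = (2 * INR n - 1).
  have e : (2 * n.-1 + 1 + 1 = 2 * n)%N by lia.
  have := f_equal INR e; rewrite !INR_addn /=; lra.
move/le_INR': h1; rewrite INR_addn INR_muln INR_expn => h1.
move/le_INR': h2; rewrite !INR_muln !INR_expn e21 => h2.
set x := INR n in hx h1 h2 e21 *.
set s := INR S in h1 *.
set b := INR B in h1 h2 *.
have i2 : INR 2 = 2 by rewrite /=; lra.
rewrite i2 in h2.
set N := (6 * n * n)%N in h1 h2 *.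
have eN : N = ((2 * n) * (3 * n)%N)%coq_nat by rewrite /N multE; lia.
have xN : (0 < pow x N) by apply: pow_lt; lra.
set y := ((2 * x - 1) / (2 * x)).
have ey : (pow (2 * x - 1) N = pow 2 N * pow x N * pow y N).
  rewrite -Rpow_mult_distr -Rpow_mult_distr; f_equal; rewrite /y; field; lra.
have hy0 : (0 <= y) by rewrite /y; apply: Rle_mult_inv_pos; lra.
have hy : (y <= exp (- / (2 * x))).
  have := exp_ineq1_le (- / (2 * x)); rewrite /y.
  have -> : ((2 * x - 1) / (2 * x) = 1 + - / (2 * x)) by field; lra.
  by [].
have hyN : (pow y N <= pow (exp (-1)) (3 * n)%N).
  rewrite eN pow_mult; apply: pow_incr; split; first by apply: pow_le.
  apply: (Rle_trans _ (pow (exp (- / (2 * x))) (2 * n)%N)).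
    by apply: pow_incr.
  rewrite exp_pow_R; right; f_equal.
  rewrite INR_muln -/x /=; field; lra.
have e2 : (pow (2 / exp 1) (3 * n)%N = pow 2 (3 * n)%N * pow (exp (-1)) (3 * n)%N).
  by rewrite -Rpow_mult_distr exp_Ropp.
have h2pos : (0 < pow 2 N) by apply: pow_lt; lra.
have hb : (b <= pow x N * pow (2 / exp 1) (3 * n)%N).
  rewrite e2.
  have h3 : (pow 2 N * b <= pow 2 N * (pow 2 (3 * n)%N * pow x N * pow y N)).
    by rewrite ey in h2; lra.
  have h4 : (b <= pow 2 (3 * n)%N * pow x N * pow y N).
    by apply: (Rmult_le_reg_l (pow 2 N)).
  apply: (Rle_trans _ _ _ h4).
  have h5 : (0 <= pow 2 (3 * n)%N * pow x N) by apply: Rmult_le_pos; [apply: pow_le|]; lra.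
  have := Rmult_le_compat_l _ _ _ h5 hyN; lra.
apply: Rle_ge.
have hb0 : (0 <= b) by apply: pos_INR.
apply: (Rmult_le_reg_r (pow x N)) => //.
rewrite /Rdiv Rmult_assoc Rinv_l; last by lra.
have : (x * b <= x * (pow x N * pow (2 / exp 1) (3 * n)%N)) by apply: Rmult_le_compat_l; lra.
nra.
Qed.
Close Scope R_scope.

Theorem theorem5 :
  exists C : nat,
    forall (n : nat) (adj : rel 'I_n) (L : 'I_n -> seq 'I_n) (src : 'I_n) (exch : bool),
      connected_graph adj -> rr_lists adj L ->
      Rge (async_success_prob exch L src (C * n))
          (Rminus 1 (Rmult (INR n) (pow (Rdiv 2 (exp 1)) (3 * n))))
      /\ sync_informed exch L src (C * n) = [set: 'I_n].
Proof.
exists 6 => n adj L src exch hg hL; split.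
  rewrite /async_success_prob.
  apply: (real_part (B := Bn n.-1 (6 * n * n) (3 * n))).
  - exact: (leq_ltn_trans (leq0n _) (ltn_ord src)).
  - exact: (@async_count n adj L src exch _ hg hL).
  - exact: Bn_bound.
apply/setP => w; rewrite inE.
have hle : 3 * n <= 6 * n by lia.
exact: (subsetP (sync_mono exch L src hle) _ (sync_reach src exch w hg hL)).
Qed.
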